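(* Let $M$ be a centrally endo-AIP right $R$-module, $S=\mathrm{End}_R(M)$, and let $N$ be a fully invariant submodule of $M$ with $T=\mathrm{End}_R(N)$. If every $\psi\in T$ extends to some $\bar\psi\in S$ (i.e. $\bar\psi|_N=\psi$), then $N$ is a centrally endo-AIP module.
   Context: For a module $X$ with $E=\mathrm{End}_R(X)$ and $K\le X$, $l_E(K)=\{\phi\in E:\phi(K)=0\}$. An ideal $I$ of $E$ is centrally s-unital if for every $a\in I$ there is $z\in I$ central in $E$ with $az=a$. $X$ is centrally endo-AIP if $l_E(K)$ is a centrally s-unital ideal of $E$ for every fully invariant submodule $K$ of $X$. *)

(* Defs.v *)
From HB Require Import structures.
From mathcomp Require Import all_boot all_order all_algebra.
Set Implicit Arguments. Unset Strict Implicit. Unset Printing Implicit Defensive.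
Import GRing.Theory.
Local Open Scope ring_scope.

(* Endomorphisms of an R-module X are the R-linear maps {linear X -> X};
   the product in E = End_R(X) is composition, (phi * psi) x = phi (psi x). *)

Definition fully_invariant (R : pzRingType) (X : lmodType R) (K : {pred X}) : Prop :=
  submod_closed K /\ forall (phi : {linear X -> X}) (x : X), x \in K -> phi x \in K.

Definition in_lann (R : pzRingType) (X : lmodType R) (K : {pred X})
  (phi : {linear X -> X}) : Prop := forall x : X, x \in K -> phi x = 0.

Definition central_endo (R : pzRingType) (X : lmodType R) (z : {linear X -> X}) : Prop :=
  forall (phi : {linear X -> X}) (x : X), z (phi x) = phi (z x).

Definition lann_centrally_s_unital (R : pzRingType) (X : lmodType R) (K : {pred X}) : Prop :=
  forall a : {linear X -> X}, in_lann K a ->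
    exists z : {linear X -> X}, [/\ in_lann K z, central_endo z & forall x, a (z x) = a x].

Definition centrally_endo_AIP (R : pzRingType) (X : lmodType R) : Prop :=
  forall K : {pred X}, fully_invariant K -> lann_centrally_s_unital K.

Section SubModule.
Variables (R : pzRingType) (M : lmodType R) (N : submodClosed M).
Definition submod_type : Type := {x : M | x \in N}.
HB.instance Definition _ := [isSub for (@sval M (fun x => x \in N)) : submod_type -> M].
HB.instance Definition _ := [Choice of submod_type by <:].
HB.instance Definition _ := [SubChoice_isSubLmodule of submod_type by <:].
End SubModule.

(* Main.v *)
Require Import Defs.
From HB Require Import structures.
From mathcomp Require Import all_boot all_order all_algebra.
Import GRing.Theory.
Local Open Scope ring_scope.

Section Restr.
Variables (R : pzRingType) (M : lmodType R^c) (N : submodClosed M)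
  (f : {linear M -> M}) (Hf : forall x, x \in N -> f x \in N).
Definition restr (y : submod_type N) : submod_type N :=
  Sub (f (val y)) (Hf _ (valP y)).
Lemma restr_lin : linear restr.
Proof.
move=> a u v; apply: val_inj.
by rewrite /restr !SubK linearP.
Qed.
HB.instance Definition _ := GRing.isLinear.Build _ _ _ _ restr restr_lin.
Definition restrL : {linear submod_type N -> submod_type N} := restr.
Lemma restrL_val y : val (restrL y) = f (val y).
Proof. by rewrite /restrL /restr SubK. Qed.
End Restr.
Arguments restrL {R M N f} Hf.
Arguments restrL_val {R M N f} Hf y.

Theorem proposition2p8 (R : pzRingType) (M : lmodType R^c) (N : submodClosed M) :
  centrally_endo_AIP M ->
  fully_invariant (mem N) ->
  (forall psi : {linear submod_type N -> submod_type N},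
     exists psibar : {linear M -> M},
       forall y : submod_type N, psibar (val y) = val (psi y)) ->
  centrally_endo_AIP (submod_type N).
Proof.
move=> aip [_ fiN] ext K [[K0 KZ] fiK] a aK.
have HN : forall (f : {linear M -> M}) x, x \in N -> f x \in N.
  by move=> f x xN; exact: fiN.
pose K' : {pred M} := fun m => if insub m is Some y then y \in K else false.
have K'P : forall m, reflect (exists y, val y = m /\ y \in K) (m \in K').
  move=> m; rewrite /in_mem /= /K'; case: insubP => [y _ <-|nN].
    apply: (iffP idP) => [yK|[y' [/val_inj -> //]]]; by exists y.
  by constructor => -[y [ym _]]; move: nN; rewrite -ym (valP y).
have fiK' : fully_invariant K'.
  split.
    split; first by apply/K'P; exists 0; split => //.
    move=> c u v /K'P[y1 [<- y1K]] /K'P[y2 [<- y2K]].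
    by apply/K'P; exists (c *: y1 + y2); split => //; apply: KZ.
  move=> phi m /K'P[y [<- yK]]; apply/K'P.
  exists (restrL (HN phi) y); split; first by rewrite restrL_val.
  by apply: fiK.
have [abar Habar] := ext a.
have abarK : in_lann K' abar.
  by move=> m /K'P[y [<- yK]]; rewrite Habar aK.
have [zb [zbK zbC zba]] := aip K' fiK' abar abarK.
exists (restrL (HN zb)); split.
- move=> y yK; apply: val_inj; rewrite restrL_val /=.
  by apply: zbK; apply/K'P; exists y.
- move=> phi y; have [pb Hpb] := ext phi; apply: val_inj.
  by rewrite !restrL_val -!Hpb restrL_val zbC.
- move=> y; apply: val_inj; by rewrite -!Habar restrL_val zba.
Qed.
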